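(* For every $n\ge1$, $$\text{(a)}\quad r_nx_1=q^{1/2}s_ny_1+r_{n-1}x_2,\qquad\text{(b)}\quad x_2s_n=r_{n-1}+q^{-1/2}M[1,0,1,1]\,s_{n-1}.$$
   Context: Based quantum torus: basis $M[a]$, $a\in\mathbb{Z}^4$, $M[a]M[b]=q^{\frac12a^T\Lambda b}M[a+b]$ with $\Lambda=\begin{pmatrix}0&0&-1&0\\0&0&0&-1\\1&0&0&-2\\0&1&2&0\end{pmatrix}$; $x_1=M[e_1],x_2=M[e_2],y_1=M[e_3],y_2=M[e_4]$. Snake graphs: for $n\ge0$, $\mathcal G_n$ is a horizontal row of $2n+1$ unit square tiles $G_{-n},\dots,G_n$ (left to right, consecutive tiles sharing a vertical edge); $G_i$ has face weight $1$ if $i+n$ is even and face weight $2$ if $i+n$ is odd. The top and bottom edges of a tile of face weight $1$ have edge weight $2$; the top and bottom edges of a tile of face weight $2$ have edge weight $1$; vertical edges carry no weight. $\mathcal H_n$ is obtained from $\mathcal G_n$ by deleting the rightmost tile $G_n$ (keeping the tiles $H_i:=G_i$, $-n\le i\le n-1$, and their edges); $\mathcal H_0$ is a single vertical edge. The minimal perfect matching $P_{min}$ of $\mathcal G_n$ consists of the top and bottom edges of all tiles of face weight $1$; that of $\mathcal H_n$ ($n\ge1$) consists of the top and bottom edges of its tiles of face weight $1$ together with its rightmost vertical edge. For a perfect matching $P$, $\mathrm{Twist}(P)$ is the set of tiles in the interior of cycles of $P\triangle P_{min}$, $y_i(P)$ the number of twisted tiles of face weight $i$, and $a_i(P)$ the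 number of edges of $P$ of edge weight $i$. Set $\nu(P)=(a_1(P)-N_1,\,a_2(P)-N_2,\,y_1(P),\,y_2(P))\in\mathbb{Z}^4$, where $N_i$ is the number of tiles of face weight $i$ (for $\mathcal G_n$: $N_1=n+1,N_2=n$; for $\mathcal H_n$: $N_1=N_2=n$). Tile exponents: in $\mathcal G_n$, $\alpha(G_i)=i/2$ if $G_i$ has face weight $1$ and $-i/2$ if weight $2$; in $\mathcal H_n$, $\alpha(H_i)=(i+1)/2$ if $H_i$ has face weight $1$ and $-i/2$ if weight $2$. $\alpha(P)=\sum_{G\in\mathrm{Twist}(P)}\alpha(G)$. Finally $r_n=\sum_{P\models\mathcal G_n}q^{\alpha(P)}M[\nu(P)]$ and $s_n=\sum_{P\models\mathcal H_n}q^{\alpha(P)}M[\nu(P)]$ (sums over perfect matchings). *)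

(* Defs.v *)
From HB Require Import structures.
From mathcomp Require Import all_boot all_order all_algebra.
Set Implicit Arguments. Unset Strict Implicit. Unset Printing Implicit Defensive.
Import Order.TTheory GRing.Theory Num.Theory.

(* Based quantum torus over Z[q^{+-1/2}].  We write v := q^{1/2}.      *)
(* An element is represented by a finite list of terms (c, (k, a))     *)
(* standing for c * v^k * M[a], c : int, k : int, a : Z^4; two lists   *)
(* denote the same element iff all coefficients agree (qeq).          *)

Definition vec4 := (int * int * int * int)%type.
Definition term := (int * (int * vec4))%type.
Definition qt := seq term.

Definition vadd (a b : vec4) : vec4 :=
  let: (a1, a2, a3, a4) := a in let: (b1, b2, b3, b4) := b in
  (a1 + b1, a2 + b2, a3 + b3, a4 + b4)%R.

(* a^T Lambda b, Lambda = [[0,0,-1,0],[0,0,0,-1],[1,0,0,-2],[0,1,2,0]] *)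
Definition lam (a b : vec4) : int :=
  let: (a1, a2, a3, a4) := a in let: (b1, b2, b3, b4) := b in
  (- (a1 * b3) - a2 * b4 + a3 * b1 - 2 * (a3 * b4) + a4 * b2 + 2 * (a4 * b3))%R.

(* M[a] M[b] = q^{1/2 a^T Lambda b} M[a+b] = v^{a^T Lambda b} M[a+b] *)
Definition tmul (x y : term) : term :=
  ((x.1 * y.1)%R, ((x.2.1 + y.2.1 + lam x.2.2 y.2.2)%R, vadd x.2.2 y.2.2)).

Definition qmul (X Y : qt) : qt := [seq tmul x y | x <- X, y <- Y].
Definition qadd (X Y : qt) : qt := X ++ Y.

Definition qcoef (X : qt) (k : int) (a : vec4) : int :=
  (\sum_(x <- X | (x.2.1 == k) && (x.2.2 == a)) x.1)%R.

Definition qeq (X Y : qt) : Prop := forall k a, qcoef X k a = qcoef Y k a.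

Definition mono (k : int) (a : vec4) : qt := [:: (1%R, (k, a))].
Definition M (a : vec4) : qt := mono 0 a.
Definition qhalf : qt := mono 1 (0, 0, 0, 0)%R.
Definition qmhalf : qt := mono (-1) (0, 0, 0, 0)%R.
Definition x1 : qt := M (1, 0, 0, 0)%R.
Definition x2 : qt := M (0, 1, 0, 0)%R.
Definition y1 : qt := M (0, 0, 1, 0)%R.
Definition y2 : qt := M (0, 0, 0, 1)%R.

(* Horizontal snake graph with m unit tiles 0..m-1 (left to right).    *)
(* Vertices: (column c, top?) with c in 0..m.                          *)
(* Edges: inl c = vertical edge at column c;                           *)
(*        inr (inl t) = top edge of tile t; inr (inr t) = bottom edge. *)
(* Tile t of G_n (m = 2n+1) is G_{t-n}; tile t of H_n (m = 2n) is      *)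
(* H_{t-n}.  Since i+n = t, tile t has face weight 1 iff t is even.    *)

Definition edge (m : nat) := ('I_m.+1 + ('I_m + 'I_m))%type.
Definition vertex (m : nat) := ('I_m.+1 * bool)%type.

Definition incident (m : nat) (e : edge m) (x : vertex m) : bool :=
  match e with
  | inl c => val c == val x.1
  | inr (inl t) => x.2 && ((val x.1 == val t) || (val x.1 == (val t).+1))
  | inr (inr t) => ~~ x.2 && ((val x.1 == val t) || (val x.1 == (val t).+1))
  end.

Definition perfect (m : nat) (P : {set edge m}) : bool :=
  [forall x : vertex m, #|[set e in P | incident e x]| == 1%N].

Definition fw (t : nat) : nat := if odd t then 2 else 1.

Definition ew (m : nat) (e : edge m) : nat :=
  match e with
  | inl _ => 0
  | inr (inl t) | inr (inr t) => if fw t == 1%N then 2 else 1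
  end.

Definition Pmin (m : nat) (withLast : bool) : {set edge m} :=
  [set e : edge m | match e with
                    | inl c => withLast && (val c == m)
                    | inr (inl t) | inr (inr t) => fw t == 1%N
                    end].

Definition rect_bd (m : nat) (j k : nat) : {set edge m} :=
  [set e : edge m | match e with
                    | inl c => (val c == j) || (val c == k.+1)
                    | inr (inl t) | inr (inr t) => (j <= val t <= k)%N
                    end].

Definition symdiff (T : finType) (A B : {set T}) : {set T} := (A :\: B) :|: (B :\: A).

(* tiles enclosed by a cycle of P (symdiff) Pmin; the cycles of the
   (ladder) snake graph are exactly the rectangle boundaries rect_bd j k *)
Definition Twist (m : nat) (Pm P : {set edge m}) : {set 'I_m} :=
  [set t : 'I_m | [exists j : 'I_m, exists k : 'I_m,
      ((j <= t <= k)%N) && (rect_bd m j k \subset symdiff P Pm)]].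

Definition ycount (m : nat) (Pm P : {set edge m}) (w : nat) : nat :=
  #|[set t in Twist Pm P | fw t == w]|.
Definition acount (m : nat) (P : {set edge m}) (w : nat) : nat :=
  #|[set e in P | ew e == w]|.
Definition Ntiles (m : nat) (w : nat) : nat := #|[set t : 'I_m | fw t == w]|.

Definition nu (m : nat) (Pm P : {set edge m}) : vec4 :=
  ((acount P 1)%:Z - (Ntiles m 1)%:Z, (acount P 2)%:Z - (Ntiles m 2)%:Z,
   (ycount Pm P 1)%:Z, (ycount Pm P 2)%:Z)%R.

(* alpha2 = 2 * alpha (so that q^{alpha} = v^{alpha2}) *)
Definition snake_sum (m : nat) (withLast : bool) (alpha2 : nat -> int) : qt :=
  [seq (1%R, ((\sum_(t in Twist (Pmin m withLast) P) alpha2 (val t))%R,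
              nu (Pmin m withLast) P))
  | P <- enum [pred P : {set edge m} | perfect P]].

(* G_n: alpha(G_i) = i/2 (weight 1), -i/2 (weight 2), i = t - n *)
Definition alphaG2 (n t : nat) : int :=
  if fw t == 1%N then (t%:Z - n%:Z)%R else (n%:Z - t%:Z)%R.
(* H_n: alpha(H_i) = (i+1)/2 (weight 1), -i/2 (weight 2), i = t - n *)
Definition alphaH2 (n t : nat) : int :=
  if fw t == 1%N then (t%:Z - n%:Z + 1)%R else (n%:Z - t%:Z)%R.

Definition r (n : nat) : qt := snake_sum (n.*2.+1) false (alphaG2 n).
Definition s (n : nat) : qt := snake_sum (n.*2) true (alphaH2 n).

(* Main.v *)
Require Import Defs.
From HB Require Import structures.
From mathcomp Require Import all_boot all_order all_algebra.
From mathcomp Require Import zify.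
Set Implicit Arguments. Unset Strict Implicit. Unset Printing Implicit Defensive.
Import Order.TTheory GRing.Theory Num.Theory.

Lemma card_sum_pred (T : finType) (p : pred T) : #|[set x | p x]| = \sum_(x : T) p x.
Proof. rewrite -sum1dep_card big_mkcond /=; apply: eq_bigr => x _; by case: (p x). Qed.

Lemma sum_ord_nat k (F : nat -> nat) : \sum_(i < k) F i = \sum_(0 <= t < k) F t.
Proof. by rewrite big_mkord. Qed.

Lemma sum_eq1 (f : nat -> bool) (c : nat) k :
  \sum_(0 <= t < k) (f t && (c == t)) = (c < k) && f c.
Proof.
elim: k => [|k IH]; first by rewrite big_geq.
rewrite big_nat_recr //= IH.
case: (ltngtP c k) => [h|h|->].
- by rewrite andbF addn0 ltnS (ltnW h).
- by rewrite andbF addn0 ltnS leqNgt h.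
- by rewrite ltnSn andbT.
Qed.

Lemma sum_eq1S (f : nat -> bool) (c : nat) k :
  \sum_(0 <= t < k) (f t && (c == t.+1)) = (0 < c) && (c.-1 < k) && f c.-1.
Proof.
case: c => [|c] /=; first by rewrite big1 // => t _; rewrite andbF.
rewrite -sum_eq1; apply: eq_bigr => t _; by rewrite eqSS.
Qed.

Lemma sum_or (f : nat -> bool) (c : nat) k :
  \sum_(0 <= t < k) (f t && ((c == t) || (c == t.+1))) =
  ((c < k) && f c) + ((0 < c) && (c.-1 < k) && f c.-1).
Proof.
rewrite -sum_eq1 -sum_eq1S -big_split /=; apply: eq_bigr => t _.
case: (f t) => //=; case: eqP => [->|] //=; by rewrite ltn_eqF.
Qed.

Lemma sum_ord_nat2 k (F : nat -> nat) (G : 'I_k -> nat) :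
  (forall i : 'I_k, G i = F i) -> \sum_(i < k) G i = \sum_(0 <= t < k) F t.
Proof. by move=> h; rewrite big_mkord; apply: eq_bigr => i _. Qed.

Lemma zsum (g : nat -> bool) k : \sum_(0 <= t < k) (g t && false) = 0.
Proof. by rewrite big1 // => t _; rewrite andbF. Qed.

Section Snake.
Variable m : nat.
Implicit Types (P Q : {set edge m}).

Definition vb P (c : nat) : bool :=
  if (insub c : option 'I_m.+1) is Some i then (inl i : edge m) \in P else false.
Definition tb P (t : nat) : bool :=
  if (insub t : option 'I_m) is Some i then (inr (inl i) : edge m) \in P else false.
Definition bb P (t : nat) : bool :=
  if (insub t : option 'I_m) is Some i then (inr (inr i) : edge m) \in P else false.

Lemma vbE P (i : 'I_m.+1) : vb P i = (inl i \in P).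
Proof. by rewrite /vb valK. Qed.
Lemma tbE P (i : 'I_m) : tb P i = (inr (inl i) \in P).
Proof. by rewrite /tb valK. Qed.
Lemma bbE P (i : 'I_m) : bb P i = (inr (inr i) \in P).
Proof. by rewrite /bb valK. Qed.
Lemma vb_out P c : m < c -> vb P c = false.
Proof. by move=> h; rewrite /vb insubF // ltnNge h. Qed.
Lemma tb_out P t : m <= t -> tb P t = false.
Proof. by move=> h; rewrite /tb insubF // ltnNge h. Qed.
Lemma bb_out P t : m <= t -> bb P t = false.
Proof. by move=> h; rewrite /bb insubF // ltnNge h. Qed.

Lemma card_inc P (c : 'I_m.+1) (b : bool) :
  #|[set e in P | incident e (c, b)]| =
  (vb P c + (if b then tb P c + ((0 < c) && tb P c.-1)
             else bb P c + ((0 < c) && bb P c.-1)))%N.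
Proof.
rewrite card_sum_pred big_sumType /= big_sumType /=.
have -> : \sum_(i : 'I_m.+1) ((inl i \in P) && (val i == val c)) = vb P c.
  rewrite (bigD1 c) //= eqxx andbT big1 ?addn0 ?vbE // => i ne.
  by move: ne; rewrite -val_eqE => /negbTE ->; rewrite andbF.
congr (_ + _)%N.
rewrite (@sum_ord_nat2 m (fun i => (tb P i && (b && ((c == i :> nat) || (c == i.+1 :> nat)))) : nat));
  last by move=> i; rewrite tbE.
rewrite (@sum_ord_nat2 m (fun i => (bb P i && (~~ b && ((c == i :> nat) || (c == i.+1 :> nat)))) : nat));
  last by move=> i; rewrite bbE.
have hc : c <= m by rewrite -ltnS.
have e1 : forall f : nat -> bool, (forall t, m <= t -> f t = false) -> (c < m) && f c = f c.
  by move=> f hf; case: ltnP => //= h; rewrite hf.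
have e2 : forall x, (0 < c) && (c.-1 < m) && x = (0 < c) && x.
  by move=> x; case: c hc {e1} => [[|c]] //= _ h; rewrite h.
case: b => /=.
- by rewrite zsum addn0 sum_or e1 ?e2 // => t; exact: tb_out.
- by rewrite zsum add0n sum_or e1 ?e2 // => t; exact: bb_out.
Qed.


Definition colok P (c : nat) : bool :=
  (vb P c + (tb P c + ((0 < c) && tb P c.-1)) == 1) &&
  (vb P c + (bb P c + ((0 < c) && bb P c.-1)) == 1).

Lemma perfectE P : perfect P = [forall c : 'I_m.+1, colok P c].
Proof.
apply/forallP/forallP => [H c | H [c b]].
- have := H (c, true); have := H (c, false).
  by rewrite /colok !card_inc /= => -> ->.
- by have /andP[h1 h2] := H c; rewrite card_inc; case: b.
Qed.

Lemma perfect_col P : perfect P -> forall c, c <= m -> colok P c.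
Proof.
rewrite perfectE => /forallP H c hc.
have hc' : c < m.+1 by [].
exact: (H (Ordinal hc')).
Qed.

Lemma col_perfect P : (forall c, c <= m -> colok P c) -> perfect P.
Proof. move=> H; rewrite perfectE; apply/forallP => c; apply: H; by rewrite -ltnS. Qed.

Lemma tb_bb P : perfect P -> forall t, tb P t = bb P t.
Proof.
move=> /perfect_col H; elim=> [|t IH].
- case: (leqP m 0) => h0; first by rewrite tb_out // bb_out.
  have /andP[/eqP h1 /eqP h2] := H 0 (leq0n m); move: h1 h2 => /=; rewrite !addn0.
  by case: (vb P 0); case: (tb P 0); case: (bb P 0).
- case: (leqP m t.+1) => h0; first by rewrite tb_out // bb_out.
  have /andP[/eqP h1 /eqP h2] := H t.+1 (ltnW h0); move: h1 h2 => /=; rewrite IH.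
  by case: (vb P t.+1); case: (tb P t.+1); case: (bb P t.+1); case: (bb P t).
Qed.

Lemma vb_det P : perfect P -> forall c, c <= m ->
  vb P c = ~~ tb P c && ~~ ((0 < c) && tb P c.-1).
Proof.
move=> /perfect_col H c hc; have /andP[/eqP h _] := H c hc; move: h.
by case: (vb P c); case: (tb P c); case: (_ && _).
Qed.

Lemma tb_indep P : perfect P -> forall t, ~~ (tb P t && tb P t.+1).
Proof.
move=> pP t; case: (leqP m t.+1) => h0; first by rewrite (tb_out _ h0) andbF.
have /andP[/eqP h _] := perfect_col pP (ltnW h0); move: h => /=.
by case: (vb P t.+1); case: (tb P t.+1); case: (tb P t).
Qed.

Lemma in_symdiff (T : finType) (A B : {set T}) x :
  (x \in symdiff A B) = ((x \in A) != (x \in B)).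
Proof. by rewrite /symdiff !inE; case: (x \in A); case: (x \in B). Qed.

Lemma tb_lt P Q t : tb P t != tb Q t -> t < m.
Proof. by case: (ltnP t m) => // h; rewrite !tb_out. Qed.

Lemma step_left P Q t : perfect P -> perfect Q -> tb P t.+1 != tb Q t.+1 ->
  vb P t.+1 = vb Q t.+1 -> tb P t != tb Q t.
Proof.
move=> pP pQ d hv; have lt := tb_lt d.
move: d hv (vb_det pP (ltnW lt)) (vb_det pQ (ltnW lt)) (tb_indep pP t) (tb_indep pQ t) => /=.
by case: (vb P t.+1); case: (vb Q t.+1); case: (tb P t.+1); case: (tb Q t.+1);
   case: (tb P t); case: (tb Q t).
Qed.

Lemma step_right P Q t : perfect P -> perfect Q -> tb P t != tb Q t ->
  vb P t.+1 = vb Q t.+1 -> tb P t.+1 != tb Q t.+1.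
Proof.
move=> pP pQ d hv; have lt := tb_lt d.
move: d hv (vb_det pP lt) (vb_det pQ lt) (tb_indep pP t) (tb_indep pQ t) => /=.
by case: (vb P t.+1); case: (vb Q t.+1); case: (tb P t.+1); case: (tb Q t.+1);
   case: (tb P t); case: (tb Q t).
Qed.

Lemma twist_left P Q : perfect P -> perfect Q -> forall t, tb P t != tb Q t ->
  exists2 j, j <= t & (vb P j != vb Q j) /\ (forall i, j <= i <= t -> tb P i != tb Q i).
Proof.
move=> pP pQ; elim=> [|t IH] d.
- exists 0 => //; split; last by case.
  move: d; rewrite (vb_det pP (leq0n m)) (vb_det pQ (leq0n m)) /=.
  by case: (tb P 0); case: (tb Q 0).
- case: (boolP (vb P t.+1 != vb Q t.+1)) => hv.
  + exists t.+1 => //; split => // i /andP[h1 h2].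
    by have -> : i = t.+1 by apply/eqP; rewrite eqn_leq h1 h2.
  + have dt := step_left pP pQ d (eqP (negbNE hv)).
    have [j hj [vj hl]] := IH dt.
    exists j; first exact: (leq_trans hj).
    split => // i /andP[h1 h2]; case: (ltngtP i t.+1) h2 => // [h3|->] _ //.
    by apply: hl; rewrite h1 -ltnS h3.
Qed.

Lemma twist_right P Q : perfect P -> perfect Q -> forall d t, m <= t + d.+1 ->
  tb P t != tb Q t ->
  exists k, [/\ t <= k, k < m, vb P k.+1 != vb Q k.+1 &
             forall i, t <= i <= k -> tb P i != tb Q i].
Proof.
move=> pP pQ; elim=> [|d IH] t ht dt.
- case: (boolP (vb P t.+1 != vb Q t.+1)) => hv.
  + exists t; split => //; first exact: tb_lt dt.
    by move=> i /andP[h1 h2]; have -> : i = t by apply/eqP; rewrite eqn_leq h1 h2.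
  + have := tb_lt (step_right pP pQ dt (eqP (negbNE hv))); rewrite addn1 in ht.
    by rewrite ltnNge ht.
- case: (boolP (vb P t.+1 != vb Q t.+1)) => hv.
  + exists t; split => //; first exact: tb_lt dt.
    by move=> i /andP[h1 h2]; have -> : i = t by apply/eqP; rewrite eqn_leq h1 h2.
  + have d1 := step_right pP pQ dt (eqP (negbNE hv)).
    have [|k [h1 h2 h3 h4]] := IH t.+1 _ d1; first by rewrite addSnnS.
    exists k; split => //; first exact: ltnW.
    move=> i /andP[i1 i2]; case: (ltngtP i t) i1 => // [h|->] _ //.
    by apply: h4; rewrite h i2.
Qed.

Lemma twistE P Q (t : 'I_m) : perfect P -> perfect Q ->
  (t \in Twist Q P) = (tb P t != tb Q t).
Proof.
move=> pP pQ; rewrite inE; apply/existsP/idP.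
- case=> j /existsP [k /andP [/andP [h1 h2] /subsetP sub]].
  have hr : (inr (inl t) : edge m) \in rect_bd m j k by rewrite inE h1 h2.
  by have := sub _ hr; rewrite in_symdiff -!tbE.
- move=> dt; have [j hj [vj hl]] := twist_left pP pQ dt.
  have [|k [hk km vk hr]] := twist_right pP pQ (d := m) (t := t) _ dt; first by lia.
  have jm : j < m by apply: leq_ltn_trans hj (ltn_ord t).
  exists (Ordinal jm); apply/existsP; exists (Ordinal km); rewrite /= hj hk /=.
  apply/subsetP => e; rewrite inE in_symdiff; case: e => [c|[i|i]] /=.
  + by move=> /orP [/eqP ec | /eqP ec]; rewrite -!vbE ec.
  + move=> hi; rewrite -!tbE; case: (leqP i t) => h.
    * by apply: hl; case/andP: hi => -> _.
    * by apply: hr; case/andP: hi => _ ->; rewrite (ltnW h).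
  + move=> hi; rewrite -!bbE -(tb_bb pP) -(tb_bb pQ); case: (leqP i t) => h.
    * by apply: hl; case/andP: hi => -> _.
    * by apply: hr; case/andP: hi => _ ->; rewrite (ltnW h).
Qed.


Lemma tbPmin wl t : tb (Pmin m wl) t = (t < m) && ~~ odd t.
Proof.
case: (ltnP t m) => h; last by rewrite tb_out.
by have := tbE (Pmin m wl) (Ordinal h); rewrite /= => ->; rewrite inE /fw; case: odd.
Qed.

Lemma bbPmin wl t : bb (Pmin m wl) t = (t < m) && ~~ odd t.
Proof.
case: (ltnP t m) => h; last by rewrite bb_out.
by have := bbE (Pmin m wl) (Ordinal h); rewrite /= => ->; rewrite inE /fw; case: odd.
Qed.

Lemma vbPmin wl c : c <= m -> vb (Pmin m wl) c = wl && (c == m).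
Proof.
move=> h; have h' : c < m.+1 by [].
by have := vbE (Pmin m wl) (Ordinal h'); rewrite /= => ->; rewrite inE.
Qed.

Lemma Pmin_perfect : perfect (Pmin m (~~ odd m)).
Proof.
apply: col_perfect => c hc; rewrite /colok vbPmin // !tbPmin !bbPmin.
case: c hc => [|c] hc /=.
- case: (posnP m) => [->|h] //; rewrite [0 == m]eq_sym (gtn_eqF h) /=; by rewrite andbF.
- rewrite hc /=.
  case: (ltngtP c.+1 m) hc => // [h|<-] _.
  + by rewrite andbF; case: (odd c).
  + by rewrite /= andbT; case: (odd c).
Qed.

Definition enc (s : seq bool) : {set edge m} :=
  [set e : edge m | match e with
     | inl c => ~~ nth false s c && ~~ ((0 < val c) && nth false s (val c).-1)
     | inr (inl t) => nth false s t
     | inr (inr t) => nth false s t end].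

Definition dec P : seq bool := mkseq (tb P) m.

Lemma nth_dec P t : nth false (dec P) t = tb P t.
Proof.
case: (ltnP t m) => h; first by rewrite nth_mkseq.
by rewrite nth_default ?size_mkseq // tb_out.
Qed.

Lemma size_dec P : size (dec P) = m.
Proof. exact: size_mkseq. Qed.

Definition indepP (s : seq bool) := forall t, ~~ (nth false s t && nth false s t.+1).

Lemma tb_enc s t : size s = m -> tb (enc s) t = nth false s t.
Proof.
move=> hs; case: (ltnP t m) => h; last by rewrite tb_out // nth_default // hs.
by have := tbE (enc s) (Ordinal h); rewrite /= => ->; rewrite inE.
Qed.

Lemma bb_enc s t : size s = m -> bb (enc s) t = nth false s t.
Proof.
move=> hs; case: (ltnP t m) => h; last by rewrite bb_out // nth_default // hs.
by have := bbE (enc s) (Ordinal h); rewrite /= => ->; rewrite inE.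
Qed.

Lemma vb_enc s c : c <= m -> vb (enc s) c = ~~ nth false s c && ~~ ((0 < c) && nth false s c.-1).
Proof.
move=> h; have h' : c < m.+1 by [].
by have := vbE (enc s) (Ordinal h'); rewrite /= => ->; rewrite inE.
Qed.

Lemma enc_perfect s : size s = m -> indepP s -> perfect (enc s).
Proof.
move=> hs hi; apply: col_perfect => c hc; rewrite /colok vb_enc // !tb_enc // !bb_enc //.
case: c hc => [|c] hc /=; first by case: (nth false s 0).
by move: (hi c); case: (nth false s c); case: (nth false s c.+1).
Qed.

Lemma dec_enc s : size s = m -> dec (enc s) = s.
Proof.
move=> hs; apply: (@eq_from_nth _ false); first by rewrite size_dec hs.
by move=> i _; rewrite nth_dec tb_enc.
Qed.

Lemma dec_indep P : perfect P -> indepP (dec P).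
Proof. by move=> pP t; rewrite !nth_dec; apply: tb_indep. Qed.

Lemma dec_inj P Q : perfect P -> perfect Q -> dec P = dec Q -> P = Q.
Proof.
move=> pP pQ e.
have ht : forall t, tb P t = tb Q t by move=> t; rewrite -!nth_dec e.
apply/setP => x; case: x => [c|[i|i]].
- have hc : c <= m by rewrite -ltnS.
  by rewrite -!vbE (vb_det pP hc) (vb_det pQ hc) !ht.
- by rewrite -!tbE ht.
- by rewrite -!bbE -(tb_bb pP) -(tb_bb pQ) ht.
Qed.

End Snake.

Definition rc2 (s : seq bool) := rcons (rcons s false) true.

Fixpoint ip (k : nat) : seq (seq bool) * seq (seq bool) :=
  match k with
  | 0 => ([:: [::]], [:: [:: false]; [:: true]])
  | k'.+1 => ((ip k').2, [seq rcons x false | x <- (ip k').2] ++ [seq rc2 x | x <- (ip k').1])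
  end.

Definition indep_def k := (ip k).1.
Fact indep_key : unit. Proof. by []. Qed.
Definition indep := locked_with indep_key indep_def.
Canonical indep_unlockable := [unlockable fun indep].

Lemma indepSS k : indep k.+2 = [seq rcons x false | x <- indep k.+1] ++ [seq rc2 x | x <- indep k].
Proof. by rewrite unlock. Qed.
Lemma indep0 : indep 0 = [:: [::]].
Proof. by rewrite unlock. Qed.
Lemma indep1 : indep 1 = [:: [:: false]; [:: true]].
Proof. by rewrite unlock. Qed.

Lemma nth_rc2 s u : nth false (rc2 s) u = nth false s u || (u == (size s).+1).
Proof.
rewrite /rc2 nth_rcons nth_rcons_default size_rcons.
case: ltngtP => h.
- by rewrite orbF.
- by rewrite orbF nth_default // (ltnW (ltnW h)).
- by rewrite orbT.
Qed.

Lemma indepP_rcons s x : indepP (rcons s x) -> indepP s.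
Proof.
have mono : forall t, nth false s t -> nth false (rcons s x) t.
  move=> t h; rewrite nth_rcons; case: ltnP => // h'.
  by rewrite nth_default in h.
move=> H t; apply/negP => /andP [/mono a /mono b].
by move: (H t); rewrite a b.
Qed.

Lemma indepP_rcf s : indepP s -> indepP (rcons s false).
Proof. by move=> H t; rewrite !nth_rcons_default. Qed.

Lemma indepP_rc2 s : indepP s -> indepP (rc2 s).
Proof.
move=> H t; rewrite !nth_rc2.
case: (eqVneq t (size s).+1) => [->|ht].
- by rewrite (nth_default _ (ltnW (ltnSn _))) nth_default //= ?(gtn_eqF (ltnSn _)) // leqW.
- case: (eqVneq t.+1 (size s).+1) => [e|ht2].
  + by move: e => /eqP; rewrite eqSS => /eqP ->; rewrite nth_default.
  + by rewrite !orbF.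
Qed.

Lemma indep_mem_aux k :
  (forall s, s \in indep k -> size s = k /\ indepP s) /\
  (forall s, s \in indep k.+1 -> size s = k.+1 /\ indepP s).
Proof.
elim: k => [|k [IH1 IH2]].
- split=> s; rewrite ?indep0 ?indep1 !inE.
  + by move/eqP->; split=> // t; rewrite nth_nil.
  + by case/orP => /eqP ->; split=> // -[|[|t]].
- split=> // s; rewrite indepSS mem_cat => /orP [] /mapP [x hx ->].
  + by have [h1 h2] := IH2 x hx; rewrite size_rcons h1; split => //; apply: indepP_rcf.
  + by have [h1 h2] := IH1 x hx; rewrite /rc2 !size_rcons h1; split => //; apply: indepP_rc2.
Qed.

Lemma indep_mem k s : s \in indep k -> size s = k /\ indepP s.
Proof. exact: (indep_mem_aux k).1. Qed.

Lemma mem_indep_aux k :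
  (forall s, size s = k -> indepP s -> s \in indep k) /\
  (forall s, size s = k.+1 -> indepP s -> s \in indep k.+1).
Proof.
elim: k => [|k [IH1 IH2]].
- split=> s.
  + by case: s => // _ _; rewrite indep0 inE.
  + by case: s => // x [|//] _ _; rewrite indep1 !inE; case: x.
- split=> // s hs hi; rewrite indepSS mem_cat.
  case/lastP: s hs hi => [//|s x] hs hi.
  rewrite size_rcons in hs; case: hs => hs.
  case: x hi => hi.
  + apply/orP; right.
    case/lastP: s hs hi => [//|s y] hs hi.
    rewrite size_rcons in hs; case: hs => hs.
    have hy : y = false.
      move: (hi (size s)); rewrite !nth_rcons !size_rcons !ltnn !eqxx ltnSn /= ?andbT.
      by case: y {hi}.
    subst y; apply/mapP; exists s => //.
    by apply: IH1 => //; do 2 apply: (indepP_rcons).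
  + apply/orP; left; apply/mapP; exists s => //.
    by apply: IH2 => //; apply: indepP_rcons hi.
Qed.

Lemma mem_indep k s : size s = k -> indepP s -> s \in indep k.
Proof. exact: (mem_indep_aux k).1. Qed.

Lemma indep_uniq_aux k : uniq (indep k) /\ uniq (indep k.+1).
Proof.
elim: k => [|k [IH1 IH2]]; first by rewrite indep0 indep1.
split => //.
have inj2 : injective rc2 by move=> a b e; apply: (@rcons_injl _ false); apply: (@rcons_injl _ true); exact e.
rewrite indepSS cat_uniq (map_inj_uniq (@rcons_injl _ false)) (map_inj_uniq inj2) IH1 IH2 /= andbT.
apply/hasPn => x /mapP [y _ ->]; apply/mapP => [[z _]] /(congr1 (last false)).
by rewrite /rc2 !last_rcons.
Qed.

Lemma indep_uniq k : uniq (indep k).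
Proof. exact: (indep_uniq_aux k).1. Qed.

Definition cntB (p : nat -> bool -> bool) (s : seq bool) : nat :=
  \sum_(0 <= t < size s) p t (nth false s t).
Definition asum (a : nat -> int) (s : seq bool) : int :=
  (\sum_(0 <= t < size s) (if nth false s t != ~~ odd t then a t else 0))%R.
Definition Wt (a : nat -> int) (s : seq bool) : term :=
  (1%R, (asum a s,
   ((2 * cntB (fun t x => odd t && x) s)%:Z - (cntB (fun t _ => ~~ odd t) s)%:Z,
    (2 * cntB (fun t x => ~~ odd t && x) s)%:Z - (cntB (fun t _ => odd t) s)%:Z,
    (cntB (fun t x => ~~ odd t && ~~ x) s)%:Z,
    (cntB (fun t x => odd t && x) s)%:Z)%R)).

Lemma sum_ord_natz k (F : nat -> int) (G : 'I_k -> int) :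
  (forall i : 'I_k, G i = F i) -> (\sum_(i < k) G i = \sum_(0 <= t < k) F t)%R.
Proof. by move=> h; rewrite big_mkord; apply: eq_bigr => i _. Qed.

Section Snake2.
Variable m : nat.
Implicit Types (P Q : {set edge m}).


Lemma dec_perm :
  perm_eq (map (@dec m) (enum [pred P : {set edge m} | perfect P])) (indep m).
Proof.
apply: uniq_perm.
- rewrite map_inj_in_uniq ?enum_uniq // => P Q; rewrite !mem_enum; exact: dec_inj.
- exact: indep_uniq.
- move=> s; apply/mapP/idP => [[P hP ->] | hs].
  + rewrite mem_enum in hP; apply: mem_indep; [exact: size_dec | exact: dec_indep].
  + have [h1 h2] := indep_mem hs; exists (enc m s); last by rewrite dec_enc.
    by rewrite mem_enum; exact: enc_perfect.
Qed.

Lemma cntB_dec p P : cntB p (dec P) = \sum_(0 <= t < m) p t (tb P t).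
Proof. by rewrite /cntB size_dec; apply: eq_bigr => t _; rewrite nth_dec. Qed.

Lemma sum_twist (a : nat -> int) P : perfect P ->
  (\sum_(t in Twist (Pmin m (~~ odd m)) P) a (val t))%R = asum a (dec P).
Proof.
move=> pP; rewrite big_mkcond /= /asum size_dec.
apply: sum_ord_natz => i; rewrite nth_dec (twistE i pP (@Pmin_perfect m)) tbPmin.
by rewrite ltn_ord.
Qed.

Lemma acountE P (w : nat) : 0 < w -> perfect P ->
  acount P w = 2 * \sum_(0 <= t < m) (tb P t && ((if odd t then 1 else 2) == w)).
Proof.
move=> hw pP; rewrite /acount card_sum_pred big_sumType /= big_sumType /=.
rewrite big1; last by move=> i _; case: w hw => // w _; rewrite andbF.
rewrite add0n (@sum_ord_nat2 m (fun t => (tb P t && ((if odd t then 1 else 2) == w)) : nat)).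
  rewrite (@sum_ord_nat2 m (fun t => (tb P t && ((if odd t then 1 else 2) == w)) : nat)).
    by rewrite mul2n addnn.
  by move=> i; rewrite tb_bb // bbE /fw; case: odd.
by move=> i; rewrite tbE /fw; case: odd.
Qed.

Lemma NtilesE (w : nat) : Ntiles m w = \sum_(0 <= t < m) (fw t == w).
Proof. by rewrite /Ntiles card_sum_pred; apply: sum_ord_nat2. Qed.

Lemma ycountE P (w : nat) : perfect P ->
  ycount (Pmin m (~~ odd m)) P w = \sum_(0 <= t < m) ((tb P t != ~~ odd t) && (fw t == w)).
Proof.
move=> pP; rewrite /ycount card_sum_pred; apply: sum_ord_nat2 => i.
by rewrite (twistE i pP (@Pmin_perfect m)) tbPmin ltn_ord.
Qed.

Lemma weightE (a : nat -> int) P : perfect P ->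
  (1%R, ((\sum_(t in Twist (Pmin m (~~ odd m)) P) a (val t))%R, nu (Pmin m (~~ odd m)) P)) = Wt a (dec P).
Proof.
move=> pP; rewrite /Wt sum_twist //; congr (_, (_, _)).
rewrite /nu !acountE // !NtilesE !ycountE // !cntB_dec.
have E : forall f g : nat -> bool, (forall t, f t = g t) ->
  \sum_(0 <= t < m) f t = \sum_(0 <= t < m) g t.
  by move=> f g h; apply: eq_bigr => t _; rewrite h.
rewrite (E (fun t => tb P t && ((if odd t then 1 else 2) == 1)) (fun t => odd t && tb P t));
  last by move=> t; case: odd; case: (tb P t).
rewrite (E (fun t => fw t == 1) (fun t => ~~ odd t)); last by move=> t; rewrite /fw; case: odd.
rewrite (E (fun t => tb P t && ((if odd t then 1 else 2) == 2)) (fun t => ~~ odd t && tb P t));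
  last by move=> t; case: odd; case: (tb P t).
rewrite (E (fun t => fw t == 2) (fun t => odd t)); last by move=> t; rewrite /fw; case: odd.
rewrite (E (fun t => (tb P t != ~~ odd t) && (fw t == 1)) (fun t => ~~ odd t && ~~ tb P t));
  last by move=> t; rewrite /fw; case: odd; case: (tb P t).
rewrite (E (fun t => (tb P t != ~~ odd t) && (fw t == 2)) (fun t => odd t && tb P t)) //.
by move=> t; rewrite /fw; case: odd; case: (tb P t).
Qed.

Lemma snake_perm wl (a : nat -> int) : wl = ~~ odd m ->
  perm_eq (snake_sum m wl a) (map (Wt a) (indep m)).
Proof.
move=> ->; rewrite /snake_sum.
have -> : [seq (1%R, ((\sum_(t in Twist (Pmin m (~~ odd m)) P) a (val t))%R,
                      nu (Pmin m (~~ odd m)) P))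
          | P <- enum [pred P : {set edge m} | perfect P]]
          = map (Wt a) (map (@dec m) (enum [pred P : {set edge m} | perfect P])).
  rewrite -map_comp; apply/eq_in_map => P; rewrite mem_enum => hP /=.
  exact: weightE.
exact: perm_map dec_perm.
Qed.

End Snake2.


Lemma cntB_rcons p s x : cntB p (rcons s x) = cntB p s + p (size s) x.
Proof.
rewrite /cntB size_rcons big_nat_recr //= nth_rcons ltnn eqxx; congr (_ + _).
by apply: eq_big_nat => t /andP[_ ht]; rewrite nth_rcons ht.
Qed.

Lemma asum_rcons a s x :
  asum a (rcons s x) = (asum a s + (if x != ~~ odd (size s) then a (size s) else 0))%R.
Proof.
rewrite /asum size_rcons big_nat_recr //= nth_rcons ltnn eqxx; congr (_ + _)%R.
by apply: eq_big_nat => t /andP[_ ht]; rewrite nth_rcons ht.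
Qed.

Lemma PoszSum (k : nat) (F : nat -> nat) :
  Posz (\sum_(0 <= t < k) F t) = (\sum_(0 <= t < k) Posz (F t))%R.
Proof. by rewrite (big_morph Posz PoszD erefl). Qed.

Definition c1 s := cntB (fun t x => odd t && x) s.
Definition c2 s := cntB (fun t x => ~~ odd t && x) s.
Definition c3 s := cntB (fun t x => ~~ odd t && ~~ x) s.
Definition cE s := cntB (fun t _ => ~~ odd t) s.
Definition cO s := cntB (fun t _ => odd t) s.

Lemma c23 s : c2 s + c3 s = cE s.
Proof.
rewrite /c2 /c3 /cE /cntB -big_split /=; apply: eq_bigr => t _.
by case: odd; case: nth.
Qed.

Lemma asumHG n s : asum (alphaH2 n) s = (asum (alphaG2 n) s + (c3 s)%:Z)%R.
Proof.
rewrite /asum /c3 /cntB PoszSum -big_split /=; apply: eq_bigr => t _.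
rewrite /alphaH2 /alphaG2 /fw; case: odd; case: nth => /=; lia.
Qed.

Lemma asumGS n s :
  asum (alphaG2 n.+1) s = (asum (alphaG2 n) s - (c3 s)%:Z + (c1 s)%:Z)%R.
Proof.
rewrite /asum /c3 /c1 /cntB !PoszSum -sumrB -big_split /=; apply: eq_bigr => t _.
rewrite /alphaG2 /fw; case: odd; case: nth => /=; lia.
Qed.

Lemma asumHS n s :
  asum (alphaH2 n.+1) s = (asum (alphaH2 n) s - (c3 s)%:Z + (c1 s)%:Z)%R.
Proof.
rewrite /asum /c3 /c1 /cntB !PoszSum -sumrB -big_split /=; apply: eq_bigr => t _.
rewrite /alphaH2 /fw; case: odd; case: nth => /=; lia.
Qed.

Lemma sumEv k : \sum_(0 <= t < k) ~~ odd t = (k + 1) %/ 2.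
Proof.
elim: k => [|k IH]; first by rewrite big_geq.
rewrite big_nat_recr //= IH; have := modn2 k; case: (odd k) => /= h; lia.
Qed.

Lemma sumOd k : \sum_(0 <= t < k) odd t = k %/ 2.
Proof.
elim: k => [|k IH]; first by rewrite big_geq.
rewrite big_nat_recr //= IH; have := modn2 k; case: (odd k) => /= h; lia.
Qed.

Lemma cEE s : cE s = (size s + 1) %/ 2.
Proof. exact: sumEv. Qed.
Lemma cOE s : cO s = size s %/ 2.
Proof. exact: sumOd. Qed.

Definition tx1 : term := (1%R, (0%R, (1, 0, 0, 0)%R)).
Definition tx2 : term := (1%R, (0%R, (0, 1, 0, 0)%R)).
Definition ty1 : term := (1%R, (0%R, (0, 0, 1, 0)%R)).
Definition tqh : term := (1%R, (1%R, (0, 0, 0, 0)%R)).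
Definition tqmh : term := (1%R, ((-1)%R, (0, 0, 0, 0)%R)).
Definition tM : term := (1%R, (0%R, (1, 0, 1, 1)%R)).

Lemma P1 n b : size b = n.*2 ->
  tmul (Wt (alphaG2 n) (rcons b false)) tx1 = tmul (tmul tqh (Wt (alphaH2 n) b)) ty1.
Proof.
move=> hb.
have e : alphaG2 n n.*2 = n by rewrite /alphaG2 /fw odd_double -mul2n /=; lia.
rewrite /Wt !cntB_rcons asum_rcons hb e odd_double /= asumHG.
rewrite -/(c1 b) -/(c2 b) -/(c3 b) -/(cE b) -/(cO b).
have h1 := c23 b; have h2 := cEE b; have h3 := cOE b.
rewrite hb -mul2n in h2 h3.
rewrite /tmul /lam /vadd /=.
congr (_, (_, (_, _, _, _))); lia.
Qed.

Lemma P2 n b : size b = n.*2.+1 ->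
  tmul (Wt (alphaG2 n.+1) (rc2 b)) tx1 = tmul (Wt (alphaG2 n) b) tx2.
Proof.
move=> hb.
rewrite /rc2 /Wt !cntB_rcons !asum_rcons size_rcons hb /= odd_double /= asumGS.
rewrite -/(c1 b) -/(c2 b) -/(c3 b) -/(cE b) -/(cO b).
have h1 := c23 b; have h2 := cEE b; have h3 := cOE b.
rewrite hb -mul2n in h2 h3.
rewrite /tmul /lam /vadd /=.
congr (_, (_, (_, _, _, _))); lia.
Qed.

Lemma P3 n b : size b = n.*2.+1 ->
  tmul tx2 (Wt (alphaH2 n.+1) (rcons b false)) = Wt (alphaG2 n) b.
Proof.
move=> hb.
rewrite /Wt !cntB_rcons !asum_rcons hb /= odd_double /= asumHS asumHG.
rewrite -/(c1 b) -/(c2 b) -/(c3 b) -/(cE b) -/(cO b).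
have h1 := c23 b; have h2 := cEE b; have h3 := cOE b.
rewrite hb -mul2n in h2 h3.
rewrite /tmul /lam /vadd /=.
congr (_, (_, (_, _, _, _))); lia.
Qed.

Lemma P4 n b : size b = n.*2 ->
  tmul tx2 (Wt (alphaH2 n.+1) (rc2 b)) = tmul (tmul tqmh tM) (Wt (alphaH2 n) b).
Proof.
move=> hb.
rewrite /rc2 /Wt !cntB_rcons !asum_rcons size_rcons hb /= odd_double /= asumHS.
rewrite -/(c1 b) -/(c2 b) -/(c3 b) -/(cE b) -/(cO b).
have h1 := c23 b; have h2 := cEE b; have h3 := cOE b.
rewrite hb -mul2n in h2 h3.
rewrite /alphaH2 /fw /= odd_double /= -mul2n.
rewrite /tmul /lam /vadd /=.
congr (_, (_, (_, _, _, _))); lia.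
Qed.

Lemma qmul_r X y : qmul X [:: y] = map (tmul^~ y) X.
Proof. by rewrite /qmul; elim: X => //= x X ->. Qed.
Lemma qmul_l x Y : qmul [:: x] Y = map (tmul x) Y.
Proof. by rewrite /qmul /= cats0. Qed.
Lemma perm_qeq X Y : perm_eq X Y -> qeq X Y.
Proof. by move=> h k a; rewrite /qcoef (perm_big _ h). Qed.
Lemma perm_eq_eq (T : eqType) (s1 s2 : seq T) : s1 = s2 -> perm_eq s1 s2.
Proof. by move->. Qed.

Unset Implicit Arguments.

Theorem mainTheorem7 (n : nat) (hn : (1 <= n)%N) :
  qeq (qmul (r n) x1) (qadd (qmul (qmul qhalf (s n)) y1) (qmul (r n.-1) x2))
  /\
  qeq (qmul x2 (s n))
      (qadd (r n.-1) (qmul (qmul qmhalf (M (1, 0, 1, 1)%R)) (s n.-1))).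
Proof.
case: n hn => // k _ /=.
have w1 : false = ~~ odd (k.+1).*2.+1 by rewrite /= odd_double.
have w2 : true = ~~ odd (k.+1).*2 by rewrite odd_double.
have w3 : false = ~~ odd k.*2.+1 by rewrite /= odd_double.
have w4 : true = ~~ odd k.*2 by rewrite odd_double.
have hrS : perm_eq (r k.+1) (map (Wt (alphaG2 k.+1)) (indep k.*2.+3))
  := snake_perm (alphaG2 k.+1) w1.
have hsS : perm_eq (s k.+1) (map (Wt (alphaH2 k.+1)) (indep k.*2.+2))
  := snake_perm (alphaH2 k.+1) w2.
have hr : perm_eq (r k) (map (Wt (alphaG2 k)) (indep k.*2.+1))
  := snake_perm (alphaG2 k) w3.
have hs : perm_eq (s k) (map (Wt (alphaH2 k)) (indep k.*2))
  := snake_perm (alphaH2 k) w4.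
split; apply: perm_qeq.
- rewrite /qadd /x1 /x2 /y1 /qhalf /M /mono !qmul_r !qmul_l.
  apply: (perm_trans (perm_map _ hrS)).
  rewrite perm_sym.
  apply: (perm_trans (perm_cat (perm_map _ (perm_map _ hsS)) (perm_map _ hr))).
  rewrite perm_sym; apply: perm_eq_eq.
  rewrite [indep k.*2.+3]indepSS !map_cat -!map_comp; congr (_ ++ _); apply/eq_in_map => b hb /=;
    have [sz _] := indep_mem hb.
  + by apply: P1; rewrite sz doubleS.
  + exact: P2.
- rewrite /qadd /x2 /qmhalf /M /mono !qmul_l.
  apply: (perm_trans (perm_map _ hsS)).
  rewrite perm_sym.
  apply: (perm_trans (perm_cat hr (perm_map _ hs))).
  rewrite perm_sym; apply: perm_eq_eq.
  rewrite [indep k.*2.+2]indepSS !map_cat -!map_comp; congr (_ ++ _); apply/eq_in_map => b hb /=;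
    have [sz _] := indep_mem hb.
  + exact: P3.
  + exact: P4.
Qed.
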